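(* Let $X$ be a compact metric space and $\tau_1,\dots,\tau_N:X\to X$ continuous maps with $X=\bigcup_{i=1}^N\tau_i(X)$, and suppose the system has an encoding map $\pi:\Omega\to X$ which is measurable from the cylinder $\sigma$-algebra of $\Omega$ to the Borel $\sigma$-algebra of $X$. Let $p_1,\dots,p_N>0$ with $\sum_ip_i=1$ and let $\mu_{(p)}$ be the Bernoulli measure on $\Omega$. Then $\nu:=\mu_{(p)}\circ\pi^{-1}$ satisfies $$\nu=\sum_{i=1}^Np_i\,\nu\circ\tau_i^{-1},$$ and the support of $\nu$ equals $X$.
   Context: $\Omega=\{1,\dots,N\}^{\mathbb{N}}$ with the $\sigma$-algebra generated by cylinder sets. An encoding: for every $\omega=(\omega_1\omega_2\dots)\in\Omega$, the set $\bigcap_{n\ge1}\tau_{\omega_1}\tau_{\omega_2}\cdots\tau_{\omega_n}(X)$ is a singleton $\{\pi(\omega)\}$. The Bernoulli measure $\mu_{(p)}$ is the unique probability measure on $\Omega$ with $\mu_{(p)}(\{\eta:\eta_1=\omega_1,\dots,\eta_n=\omega_n\})=p_{\omega_1}\cdots p_{\omega_n}$. *)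

(* Defs.v *)
From HB Require Import structures.
From mathcomp Require Import all_boot all_order all_algebra.
From mathcomp Require Import all_classical all_reals all_analysis.
Set Implicit Arguments. Unset Strict Implicit. Unset Printing Implicit Defensive.
Import Order.TTheory GRing.Theory Num.Theory.
Local Open Scope classical_set_scope.
Local Open Scope ring_scope.

(* 'I_N.+1 is inhabited: make it a pointedType (needed for the sigma-algebra type) *)
HB.instance Definition _ (n : nat) := isPointed.Build 'I_n.+1 ord0.

(* Symbols are 'I_N.+1, i.e. N.+1 >= 1 maps tau_0, ..., tau_N. *)
Definition cylinder (N : nat) (w : seq 'I_N.+1) : set (nat -> 'I_N.+1) :=
  [set eta | forall k, (k < size w)%N -> eta k = nth ord0 w k].

Definition cylinders (N : nat) : set (set (nat -> 'I_N.+1)) := range (@cylinder N).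

Notation Omega N := (g_sigma_algebraType (@cylinders N)).

Notation borel X := (g_sigma_algebraType (@open X)).

Definition word_image (X : Type) (N : nat) (tau : 'I_N.+1 -> X -> X)
  (w : seq 'I_N.+1) : set X :=
  foldr (fun i A => tau i @` A) setT w.

Definition is_encoding (X : Type) (N : nat) (tau : 'I_N.+1 -> X -> X)
  (pi : (nat -> 'I_N.+1) -> X) : Prop :=
  forall omega, \bigcap_(n in [set n | (0 < n)%N]) word_image tau (mkseq omega n)
                = [set pi omega].

Definition measure_support (R : realType) (X : topologicalType) (nu : set X -> \bar R) : set X :=
  [set x | forall U, open U -> U x -> (0 < nu U)%E].

(* Main.v *)
Require Import Defs.
From HB Require Import structures.
From mathcomp Require Import all_boot all_order all_algebra.
From mathcomp Require Import all_classical all_reals all_analysis.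
Import Order.TTheory GRing.Theory Num.Theory.
Local Open Scope classical_set_scope.
Local Open Scope ring_scope.
Set Warnings "-notation-overridden,-ambiguous-paths,-notation-incompatible-prefix".
Lemma mkseqS' T (f : nat -> T) n : mkseq f n.+1 = f 0%N :: mkseq (fun k => f k.+1) n.
Proof. by rewrite /mkseq /= -add1n iotaDl -map_comp. Qed.

Lemma mkseqSr T (f : nat -> T) n : mkseq f n.+1 = rcons (mkseq f n) (f n).
Proof. by rewrite /mkseq -addn1 iotaD map_cat cats1 add0n. Qed.

Lemma pi_in_W (X : Type) N (tau : 'I_N.+1 -> X -> X) pi :
  is_encoding tau pi -> forall om n, word_image tau (mkseq om n) (pi om).
Proof.
move=> enc om [|n]; first by [].
have : [set pi om] (pi om) by [].
by rewrite -enc; apply.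
Qed.

Lemma pi_shift (X : Type) N (tau : 'I_N.+1 -> X -> X) pi :
  is_encoding tau pi -> forall eta, pi eta = tau (eta 0%N) (pi (fun k => eta k.+1)).
Proof.
move=> enc eta.
have : (\bigcap_(n in [set n | (0 < n)%N]) word_image tau (mkseq eta n))
          (tau (eta 0%N) (pi (fun k => eta k.+1))).
  move=> [|n] // _; rewrite mkseqS' /=.
  by exists (pi (fun k => eta k.+1)) => //; exact: pi_in_W.
by rewrite enc => ->.
Qed.

Lemma word_image_rcons (X : Type) N (tau : 'I_N.+1 -> X -> X) w j :
  word_image tau (rcons w j) `<=` word_image tau w.
Proof.
elim: w => [|i w IH] //= x [y Hy <-]; exists y => //; exact: IH.
Qed.

Lemma W_decr (X : Type) N (tau : 'I_N.+1 -> X -> X) om m n : (m <= n)%N ->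
  word_image tau (mkseq om n) `<=` word_image tau (mkseq om m).
Proof.
move=> hmn; rewrite -(subnKC hmn); elim: (n - m)%N => [|k IH]; first by rewrite addn0.
rewrite addnS mkseqSr => x hx; apply: IH; exact: word_image_rcons hx.
Qed.

Lemma W_compact (R : realType) (X : pseudoPMetricType R) N (tau : 'I_N.+1 -> X -> X) :
  compact [set: X] -> (forall i, continuous (tau i)) ->
  forall w, compact (word_image tau w).
Proof.
move=> cX ct; elim=> [|i w IH] //=.
apply: continuous_compact => //; exact: continuous_subspaceT.
Qed.

Lemma surj_seq (X : Type) N (tau : 'I_N.+1 -> X -> X) :
  [set: X] = \bigcup_(i in [set: 'I_N.+1]) (tau i @` [set: X]) ->
  forall x, exists om, forall n, word_image tau (mkseq om n) x.
Proof.
move=> hc x.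
have hg : forall y : X, exists ij : 'I_N.+1 * X, y = tau ij.1 ij.2.
  move=> y; have : [set: X] y by [].
  by rewrite hc => -[i _ [z _ <-]]; exists (i, z).
have [g Hg] := choice hg.
pose xs k := iter k (fun y => (g y).2) x.
pose om k := (g (xs k)).1.
have key : forall n k, word_image tau (mkseq (fun j => om (j + k)%N) n) (xs k).
  elim=> [|n IH] k //.
  rewrite mkseqS' /=; exists (xs k.+1).
    rewrite (eq_mkseq (g := fun j => om (j + k.+1)%N)); first exact: IH.
    by move=> j; rewrite addSnnS.
  by rewrite /om /xs /= -Hg.
exists om => n; have := key n 0%N.
by rewrite (eq_mkseq (g := om)) // => j; rewrite addn0.
Qed.
Lemma nested_in_open (R : realType) (X : pseudoPMetricType R) N (tau : 'I_N.+1 -> X -> X)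
  (pi : (nat -> 'I_N.+1) -> X) om (U : set X) :
  hausdorff_space X -> compact [set: X] -> (forall i, continuous (tau i)) ->
  is_encoding tau pi -> open U -> U (pi om) ->
  exists n, word_image tau (mkseq om n) `<=` U.
Proof.
move=> hH cX ct enc oU Ux.
apply: contrapT => hn.
pose f n := word_image tau (mkseq om n) `&` ~` U.
have : \bigcap_(n in [set: nat]) f n !=set0.
  have cX' := cX; move: cX'; rewrite compact_In0 /= => /(_ nat [set: nat] f); apply.
    exists f => [i _|i _]; last by rewrite setTI.
    apply: closedI; first by apply: compact_closed => //; exact: W_compact.
    exact: open_closedC.
  move=> D _.
  have [y [Wy nUy]] : f (\max_(i <- finmap.enum_fset D) i)%N !=set0.
    apply: contrapT => h; apply: hn; exists (\max_(i <- finmap.enum_fset D) i)%N => z Wz.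
    apply: contrapT => nUz; apply: h; by exists z.
  exists y => i /= iD; split => //.
  move: Wy; apply: W_decr; exact: (leq_bigmax_seq (F := id)).
move=> [z /= fz].
have : [set pi om] z.
  rewrite -enc => n _; exact: (fz n I).1.
by move=> /= zE; apply: (fz 0%N I).2; rewrite zE.
Qed.
Definition cylG (N : nat) : set (set (nat -> 'I_N.+1)) :=
  [set A | cylinders A \/ A = set0].

Lemma cyl_sub N (v w : seq 'I_N.+1) : take (size v) w = v -> cylinder w `<=` cylinder v.
Proof.
move=> hv eta hw k hk.
have hs : (size v <= size w)%N.
  by rewrite -{1}hv size_take; case: ifP => // /ltnW.
by rewrite -hv nth_take // hw // (leq_trans hk hs).
Qed.

Lemma cyl_disj N (v w : seq 'I_N.+1) : (size v <= size w)%N -> take (size v) w != v ->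
  cylinder v `&` cylinder w = set0.
Proof.
move=> hs hne; apply/seteqP; split => // eta [hv hw].
move/negP: hne; apply; apply/eqP.
apply: (eq_from_nth (x0 := ord0)); first by rewrite size_takel.
move=> k; rewrite size_takel // => hk.
by rewrite nth_take // -hw ?hv // (leq_trans hk hs).
Qed.

Lemma cylG_setI N : setI_closed (@cylG N).
Proof.
move=> A B [[v _ <-]|->]; last by rewrite set0I; right.
move=> [[w _ <-]|->]; last by rewrite setI0; right.
have gen : forall v w : seq 'I_N.+1, (size v <= size w)%N ->
    @cylG N (cylinder v `&` cylinder w).
  move=> v' w' hs; case: (boolP (take (size v') w' == v')) => [/eqP h|h].
    by left; exists w' => //; rewrite setIidr //; exact: cyl_sub.
  by right; exact: cyl_disj.
case: (leqP (size v) (size w)) => h; first exact: gen.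
by rewrite setIC; apply: gen; exact: ltnW.
Qed.

Lemma cylG_gen N : <<s @cylinders N >> = <<s @cylG N >>.
Proof.
rewrite eqEsubset; split.
  apply: smallest_sub; first exact: smallest_sigma_algebra.
  by move=> A hA; apply: sub_gen_smallest; left.
apply: smallest_sub; first exact: smallest_sigma_algebra.
move=> A [hA|->]; first exact: sub_gen_smallest.
exact: sigma_algebra0.
Qed.
Definition shiftS N (eta : nat -> 'I_N.+1) : nat -> 'I_N.+1 := fun k => eta k.+1.

Lemma shift_measure (R : realType) N (p : 'I_N.+1 -> R) (mu : probability (Omega N) R) :
  (forall w : seq 'I_N.+1, mu (cylinder w) = (\prod_(i <- w) p i)%:E) ->
  forall i (B : set (Omega N)), measurable B ->
  measurable ((cylinder [:: i] : set (Omega N)) `&` (shiftS N : Omega N -> Omega N) @^-1` B)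
  /\ mu ((cylinder [:: i] : set (Omega N)) `&` (shiftS N : Omega N -> Omega N) @^-1` B)
     = ((p i)%:E * mu B)%E.
Proof.
move=> hmu i B mB.
pose C : set (Omega N) := cylinder [:: i].
pose f : Omega N -> Omega N := shiftS N.
have mC : measurable C by apply: sub_gen_smallest; exists [:: i].
have muC : mu C = (p i)%:E by rewrite /C hmu big_cons big_nil mulr1.
have := @dynkin_induction _ (Omega N) (@cylG N)
   (fun B => measurable (C `&` f @^-1` B) /\ mu (C `&` f @^-1` B) = ((p i)%:E * mu B)%E).
apply => //.
- exact: cylG_gen.
- exact: cylG_setI.
- by rewrite preimage_setT setIT probability_setT mule1.
- move=> A [[w _ <-]|->]; last by rewrite preimage_set0 setI0 measure0 mule0.
  have -> : C `&` f @^-1` cylinder w = cylinder (i :: w).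
    apply/seteqP; split => eta /=.
      by move=> [h1 h2] [|k] hk /=; [exact: h1 | exact: h2].
    move=> h; split; first by move=> [|k] //= _; exact: (h 0%N).
    by move=> k hk; exact: (h k.+1).
  split; first by apply: sub_gen_smallest; exists (i :: w).
  by rewrite hmu big_cons EFinM hmu.
- move=> S mS [mCS hCS].
  have -> : C `&` f @^-1` (~` S) = C `\` (C `&` f @^-1` S).
    apply/seteqP; split => eta /=.
      by move=> [hc hs]; split => // -[].
    by move=> [hc hn]; split => // hs; apply: hn.
  split; first exact: measurableD.
  have hCoo : (mu C < +oo)%E by rewrite muC ltry.
  rewrite measureD // setIA setIid.
  apply: (@eq_trans _ _ (mu C - (p i)%:E * mu S)%E); first by congr (_ - _)%E.
  rewrite muC probability_setC //.
  have := fin_num_measure mu S mS; move=> /fineK <-.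
  by rewrite -EFinM -EFinB -EFinB -EFinM mulrBr mulr1.
- move=> F mF tF hF.
  rewrite preimage_bigcup setI_bigcupr.
  split; first by apply: bigcup_measurable => n _; exact: (hF n).1.
  have h1 : forall n, [set: nat] n -> measurable (C `&` f @^-1` F n).
    by move=> n _; exact: (hF n).1.
  have h2 : trivIset [set: nat] (fun n => C `&` f @^-1` F n).
    move=> n m _ _ [eta [[_ h1'] [_ h2']]]; apply: tF => //; by exists (f eta).
  rewrite [LHS](measure_bigcup mu _ _ h1 h2).
  have h3 : forall n, [set: nat] n -> measurable (F n) by move=> n _; exact: mF.
  rewrite [in RHS](measure_bigcup mu _ _ h3 tF).
  have h4 : forall n, n \in [set: nat] -> (0 <= mu (F n))%E by move=> n _; exact: measure_ge0.
  rewrite -(nneseriesZl _ _ h4).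
  by apply: eq_eseriesr => n _; exact: (hF n).2.
- by rewrite -cylG_gen.
Qed.
Theorem lemma6p1 (R : realType) (X : pseudoPMetricType R) (N : nat)
  (tau : 'I_N.+1 -> X -> X)
  (hX_haus : hausdorff_space X) (hX_cpt : compact [set: X])
  (htau_cont : forall i, continuous (tau i))
  (hcover : [set: X] = \bigcup_(i in [set: 'I_N.+1]) (tau i @` [set: X]))
  (pi : Omega N -> borel X)
  (hpi_enc : is_encoding tau pi)
  (hpi_meas : measurable_fun [set: Omega N] pi)
  (p : 'I_N.+1 -> R) (hp_pos : forall i, 0 < p i) (hp_sum : \sum_(i < N.+1) p i = 1)
  (mu : probability (Omega N) R)
  (hmu_bern : forall w : seq 'I_N.+1,
      mu (cylinder w) = (\prod_(i <- w) p i)%:E) :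
  let nu : set X -> \bar R := fun A => mu (pi @^-1` A) in
  (forall A : set (borel X), measurable A ->
     nu A = (\sum_(i < N.+1) (p i)%:E * nu (tau i @^-1` A))%E)
  /\ measure_support nu = [set: X].
Proof.
move=> nu; split; last first.
  rewrite eqEsubset; split => // x _ U oU Ux.
  have [om hom] := surj_seq _ _ _ hcover x.
  have xE : x = pi om.
    have : (\bigcap_(n in [set n | (0<n)%N]) word_image tau (mkseq om n)) x.
      by move=> n _; exact: hom.
    by rewrite hpi_enc.
  rewrite xE in Ux.
  have [n hn] := nested_in_open _ _ _ _ _ _ _ hX_haus hX_cpt htau_cont hpi_enc oU Ux.
  have mU : measurable (pi @^-1` U).
    rewrite -[pi @^-1` U]setTI; apply: hpi_meas => //; exact: sub_gen_smallest.
  have mC : measurable (cylinder (mkseq om n) : set (Omega N)).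
    by apply: sub_gen_smallest; exists (mkseq om n).
  apply: (@lt_le_trans _ _ (mu (cylinder (mkseq om n)))).
    rewrite hmu_bern lte_fin; apply: prodr_gt0 => i _; exact: hp_pos.
  apply: le_measure; rewrite ?inE //.
  move=> eta heta; apply: hn.
  have -> : mkseq om n = mkseq eta n.
    apply/eq_in_map => k; rewrite mem_iota add0n => /andP[_ hk].
    by rewrite (heta k) ?size_mkseq // nth_mkseq.
  exact: pi_in_W.
move=> A mA.
have tm : forall i, measurable (tau i @^-1` A : set (borel X)).
  move=> i.
  have mt : measurable_fun [set: borel X] (tau i : borel X -> borel X).
    apply: measurability; first exact: erefl.
    move=> _ [B oB <-]; apply: sub_gen_smallest; rewrite setTI.
    by apply: open_comp => // x _; exact: htau_cont.
  by rewrite -[_ @^-1` A]setTI; apply: mt.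
have mB : forall i, measurable (pi @^-1` (tau i @^-1` A)).
  by move=> i; rewrite -[_ @^-1` _]setTI; apply: hpi_meas => //; exact: tm.
pose D i : set (Omega N) := (cylinder [:: i] : set (Omega N)) `&`
  (shiftS N : Omega N -> Omega N) @^-1` (pi @^-1` (tau i @^-1` A)).
have hD := shift_measure _ _ _ _ hmu_bern.
have mD : forall i, measurable (D i) by move=> i; exact: (hD i _ (mB i)).1.
have tD : trivIset setT D.
  move=> i j _ _ [eta [[h1 _] [h2 _]]].
  have e1 := h1 0%N isT; have e2 := h2 0%N isT; simpl in e1, e2.
  by rewrite -e1 -e2.
have -> : nu A = mu (\big[setU/set0]_(i < N.+1) D i).
  rewrite /nu; congr (mu _).
  have -> : \big[setU/set0]_(i < N.+1) D i = \bigcup_(i in [set` xpredT]) D i.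
    by rewrite bigcup_pred.
  apply/seteqP; split => eta /=.
    move=> hA; exists (eta 0%N) => //; split; first by move=> [|k].
    by rewrite /= /shiftS -(pi_shift _ _ _ _ hpi_enc).
  move=> [i _ [h0 hA]]; rewrite (pi_shift _ _ _ _ hpi_enc eta).
  by rewrite (h0 0%N isT).
rewrite measure_bigsetU_ord //.
by apply: eq_bigr => i _; exact: (hD i _ (mB i)).2.
Qed.
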